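(* Let $D \subseteq L$ be a total clone on $\{0,1\}$ such that $D \subseteq B$ for some $B \in \{T_0, T_1, S\}$. Then $\mathcal{I}_{\mathrm{str}}(D)$ has the cardinality of the continuum.
   Context: Let $\mathbf{2}=\{0,1\}$. A partial function of arity $n$ on $\mathbf{2}$ is a map $f:\operatorname{dom} f\to\mathbf{2}$ with $\operatorname{dom} f\subseteq \mathbf{2}^n$; it is total if $\operatorname{dom} f=\mathbf{2}^n$. $P_{\mathbf{2}}$ is the set of all partial functions, $O_{\mathbf{2}}$ the set of total ones. Composition $F=f(g_1,\dots,g_n)$ is given by $F(\mathbf{x})=f(g_1(\mathbf{x}),\dots,g_n(\mathbf{x}))$ on $\operatorname{dom} F=\{\mathbf{x}\in\bigcap_i\operatorname{dom} g_i : (g_1(\mathbf{x}),\dots,g_n(\mathbf{x}))\in\operatorname{dom} f\}$. A partial clone is a composition-closed subset of $P_{\mathbf{2}}$ containing all projections; a total clone is one contained in $O_{\mathbf{2}}$. A partial clone $X$ is strong if it contains every restriction of each of its members. For a total clone $C$, $\mathcal{I}_{\mathrm{str}}(C)$ is the set of all strong partial clones $X$ with $X\cap O_{\mathbf{2}}=C$. $L$ is the clone of linear functions $a_0\oplus a_1x_1\oplus\cdots\oplus a_nx_n$; $T_a$ is the clone of total functions with $f(a,\dots,a)=a$; $S$ is the clone of self-dual total functions. *)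

(* Defs.v *)
From HB Require Import structures.
From mathcomp Require Import all_boot.
From mathcomp Require Import boolp classical_sets cardinality.
Set Implicit Arguments. Unset Strict Implicit. Unset Printing Implicit Defensive.

(* Following the usual convention for clones,
   arities are positive: a partial function of arity n.+1 is a finite map
   from (n.+1)-tuples of bools to option bool (None = outside the domain). *)
Definition pmap (n : nat) := {ffun n.-tuple bool -> option bool}.

Definition pfun := {n : nat & pmap n.+1}.

Definition mkpf (n : nat) (f : pmap n.+1) : pfun := existT (fun k => pmap k.+1) n f.

Definition total (f : pfun) : Prop := forall x, projT2 f x != None.

Definition proj (n : nat) (i : 'I_n.+1) : pmap n.+1 :=
  [ffun x => Some (tnth x i)].

Definition comp (n m : nat) (f : pmap n) (g : 'I_n -> pmap m) : pmap m :=
  [ffun x => if [forall i, g i x != None]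
             then f [tuple odflt false (g i x) | i < n]
             else None].

Definition partial_clone (X : set pfun) : Prop :=
  (forall n (i : 'I_n.+1), X (mkpf (proj i))) /\
  (forall n m (f : pmap n.+1) (g : 'I_n.+1 -> pmap m.+1),
      X (mkpf f) -> (forall i, X (mkpf (g i))) -> X (mkpf (comp f g))).

Definition total_clone (C : set pfun) : Prop :=
  partial_clone C /\ (forall f, C f -> total f).

Definition restriction (n : nat) (g f : pmap n) : Prop :=
  forall x, g x = None \/ g x = f x.

Definition strong (X : set pfun) : Prop :=
  forall n (f g : pmap n.+1), X (mkpf f) -> restriction g f -> X (mkpf g).

Definition Istr (C : set pfun) : set (set pfun) :=
  [set X | partial_clone X /\ strong X /\
           (forall f, (X f /\ total f) <-> C f)].

Definition L : set pfun :=
  [set f : pfun | exists (a0 : bool) (a : 'I_(projT1 f).+1 -> bool),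
     forall x, projT2 f x =
       Some (a0 (+) \big[addb/false]_(i < (projT1 f).+1) (a i && tnth x i))].

Definition T (a : bool) : set pfun :=
  [set f : pfun | total f /\ projT2 f [tuple of nseq (projT1 f).+1 a] = Some a].

Definition S : set pfun :=
  [set f : pfun | total f /\ forall x : (projT1 f).+1.-tuple bool,
     projT2 f (map_tuple negb x) = omap negb (projT2 f x)].

(* Main.v *)
Require Import Defs.
From HB Require Import structures.
From mathcomp Require Import all_boot.
From mathcomp Require Import boolp classical_sets cardinality.
Local Open Scope classical_set_scope.
Notation pmap := Defs.pmap.
Notation comp := Defs.comp.
Set Implicit Arguments. Unset Strict Implicit. Unset Printing Implicit Defensive.

Lemma compE n m (f : pmap n) (g : 'I_n -> pmap m) x :
  comp f g x = if [forall i, g i x != None]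
               then f [tuple odflt false (g i x) | i < n] else None.
Proof. by rewrite /comp ffunE. Qed.

Section Framework.
Variable D : set pfun.
Hypothesis HD : total_clone D.

Definition StrD : set pfun :=
  fun F => exists d : pmap (projT1 F).+1, D (mkpf d) /\ restriction (projT2 F) d.

Definition free (c : nat) (K : pred ((c.+1).-tuple bool)) (k : nat) (f : pmap k.+1) : Prop :=
  ~ exists psi : 'I_k.+1 -> pmap c.+1,
      (forall i, D (mkpf (psi i))) /\
      (forall p, K p -> f [tuple odflt false (psi i p) | i < k.+1] != None).

Variables (I : Type) (tc : I -> nat) (tK : forall i, pred ((tc i).+1.-tuple bool)).

Definition XX (S : set I) : set pfun :=
  fun F => StrD F \/ (forall i, S i -> free (@tK i) (projT2 F)).

Lemma Dtot n (d : pmap n.+1) x : D (mkpf d) -> d x != None.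
Proof. by move=> /(HD.2) /(_ x). Qed.

Lemma restr_refl n (f : pmap n) : restriction f f.
Proof. by move=> x; right. Qed.

Lemma restr_comp n m (f d : pmap n) (g dd : 'I_n -> pmap m) :
  restriction f d -> (forall i, restriction (g i) (dd i)) ->
  restriction (comp f g) (comp d dd).
Proof.
move=> Hf Hg x; rewrite !compE.
case: ifP => [/forallP H|]; last by left.
have E : forall i, g i x = dd i x.
  by move=> i; case: (Hg i x) => // E; move: (H i); rewrite E.
have -> : [forall i, dd i x != None].
  by apply/forallP => i; rewrite -E; exact: H.
have -> : [tuple odflt false (g i x) | i < n] = [tuple odflt false (dd i x) | i < n].
  by apply: eq_mktuple => i; rewrite E.
exact: Hf.
Qed.

Lemma comp_defg n m (f : pmap n) (g : 'I_n -> pmap m) x i :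
  comp f g x != None -> g i x != None.
Proof. by rewrite compE; case: ifP => // /forallP. Qed.

Lemma free_restr c K k (f g : pmap k.+1) :
  restriction g f -> @free c K k f -> free K g.
Proof.
move=> R Hf [psi [HD1 HK]]; apply: Hf; exists psi; split => // p Kp.
by case: (R [tuple odflt false (psi i p) | i < k.+1]) (HK p Kp) => ->.
Qed.

Lemma XX_Istr (S : set I) :
  (exists i0, S i0 /\ exists p, @tK i0 p) -> Istr D (XX S).
Proof.
move=> [i0 [Si0 [p0 Kp0]]].
split; [split|split].
- move=> n i; left; exists (proj i); split; last exact: restr_refl.
  exact: HD.1.1.
- move=> n m f g Hf Hg.
  case: (pselect (exists i, ~ StrD (mkpf (g i)))) => [[i Ni]|Ng].
  +
    right => j Sj [psi [Hpsi HK]].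
    case: (Hg i) => [/Ni//|/(_ j Sj) Fi]; apply: Fi; exists psi; split => // p Kp.
    exact: (comp_defg i (HK p Kp)).
  + have Sg : forall i, StrD (mkpf (g i)).
      by move=> i; apply: contra_notP Ng => N; exists i.
    have /choice [dd Hdd] : forall i, exists d : pmap m.+1,
        D (mkpf d) /\ restriction (g i) d by move=> i; exact: Sg.
    case: Hf => [[d [Dd Rd]]|Wf].
    * left; exists (comp d dd); split.
        by apply: HD.1.2 => // i; exact: (Hdd i).1.
      by apply: restr_comp => // i; exact: (Hdd i).2.
    * right => j Sj [psi [Hpsi HK]].
      apply: (Wf j Sj); exists (fun k => comp (dd k) psi); split.
        by move=> k; apply: HD.1.2 => //; exact: (Hdd k).1.
      move=> p Kp; have Hx := HK p Kp.
      set x := [tuple odflt false (psi i p) | i < m.+1] in Hx.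
      have Hpsi' : [forall i, psi i p != None] by apply/forallP => i; exact: Dtot.
      have E : forall k, comp (dd k) psi p = g k x.
        move=> k; rewrite compE Hpsi'.
        case: ((Hdd k).2 x) => [E|->] //.
        by move: (comp_defg k Hx); rewrite E.
      move: Hx; rewrite compE; case: ifP => // _.
      congr (_ != _); congr (f _); apply: eq_mktuple => k; by rewrite E.
- move=> n f g [[d [Dd Rd]]|Wf] Rg.
  + left; exists d; split => // x.
    by case: (Rg x) => ->; [left|exact: Rd].
  + right => i Si; exact: free_restr Rg (Wf i Si).
- case=> n f; split.
  + move=> [[[d [Dd Rd]]|Wf] Tf].
    * suff -> : f = d by [].
      apply/ffunP => x; case: (Rd x) => // E; by move: (Tf x); rewrite E.
    * exfalso; apply: (Wf i0 Si0).
      exists (fun _ => proj ord0); split; first by move=> i; exact: HD.1.1.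
      by move=> p _; exact: Tf.
  + move=> Df; split; last exact: HD.2.
    by left; exists f; split => //; exact: restr_refl.
Qed.

End Framework.

Section Card.
Variable D : set pfun.
Hypothesis HD : total_clone D.
Variables (tc : option nat -> nat) (tK : forall i, pred ((tc i).+1.-tuple bool)).
Variables (ar : nat -> nat) (hm : forall n, pmap (ar n).+1).
Hypothesis H1 : forall n, ~ StrD D (mkpf (hm n)).
Hypothesis H2 : forall n, ~ free D (@tK (Some n)) (hm n).
Hypothesis H3 : forall n, free D (@tK None) (hm n).
Hypothesis H4 : forall n m, n <> m -> free D (@tK (Some m)) (hm n).
Hypothesis H0 : exists p, @tK None p.

Definition SA (A : set nat) : set (option nat) :=
  fun i => match i with None => True | Some n => A n end.

Lemma XX_inj_aux (A B : set nat) n :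
  XX D tK (SA A) = XX D tK (SA B) -> A n -> B n.
Proof.
move=> E An; case: (pselect (B n)) => // Bn; exfalso.
have : XX D tK (SA B) (mkpf (hm n)).
  right => -[m|] /= Hm; last exact: H3.
  by apply: H4 => nm; apply: Bn; rewrite nm.
rewrite -E => -[/H1 //|W].
exact: (H2 (W (Some n) An)).
Qed.

Lemma card_Istr : (Istr D #= [set: set nat])%card.
Proof.
apply: Cantor_Bernstein.
- apply/pcard_injP; exists (fun X => pickle @` X) => X Y _ _ E.
  apply/funext => F; apply/propext; split => HF.
  + have : (pickle @` Y) (pickle F) by rewrite -E; exists F.
    by move=> [G YG /(pcan_inj pickleK) <-].
  + have : (pickle @` X) (pickle F) by rewrite E; exists F.
    by move=> [G XG /(pcan_inj pickleK) <-].
- apply/pcard_leP; apply/injfunPex; exists (fun A => XX D tK (SA A)).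
  + move=> A _; apply: XX_Istr => //.
    by exists None; split.
  + move=> A B _ _ E; apply/funext => n; apply/propext; split;
      [exact: XX_inj_aux|exact: XX_inj_aux (esym E)].
Qed.

End Card.
From mathcomp Require Import zify.

Section Weights.
Local Close Scope classical_set_scope.
Variable M : nat.
Implicit Types u v : 'I_M -> bool.
Definition W v := #|[set i | v i]|.
Definition Kw v := [|| W v == 1, W v == 2 | W v == M].

Lemma W_le v : W v <= M.
Proof. by rewrite /W; apply: leq_trans (max_card _) _; rewrite card_ord. Qed.

Lemma W_eq u v : (forall i, u i = v i) -> W u = W v.
Proof. by move=> E; apply: eq_card => i; rewrite !inE E. Qed.

Lemma W_neg v : W (fun i => ~~ v i) = M - W v.
Proof.
rewrite /W; have -> : [set i | ~~ v i] = ~: [set i | v i].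
  by apply/setP => i; rewrite !inE.
have H := cardsC [set i | v i]; rewrite card_ord in H; lia.
Qed.

Lemma W_xor_le u v : W (fun i => u i (+) v i) <= W u + W v.
Proof.
rewrite /W; apply: (leq_trans _ (leq_of_leqif (leq_card_setU [set i | u i] [set i | v i]))).
apply: subset_leq_card; apply/fintype.subsetP => i; rewrite !inE.
by case: (u i); case: (v i).
Qed.

Lemma W_xor_disj u v : (forall i, ~~ (u i && v i)) ->
  W (fun i => u i (+) v i) = W u + W v.
Proof.
move=> H; rewrite /W.
have -> : [set i | u i (+) v i] = [set i | u i] :|: [set i | v i].
  apply/setP => i; rewrite !inE; move: (H i).
  by case: (u i); case: (v i).
rewrite cardsU; have -> : [set i | u i] :&: [set i | v i] = finset.set0.
  apply/setP => i; rewrite !inE; move: (H i).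
  by case: (u i); case: (v i).
by rewrite cards0 subn0.
Qed.

Lemma W0 v : W v = 0 -> forall i, v i = false.
Proof.
move=> /cards0_eq E i; apply/negP => vi.
have : i \in [set i | v i] by rewrite inE.
by rewrite E finset.in_set0.
Qed.

Lemma WM v : W v = M -> forall i, v i.
Proof.
move=> E i; have := W0 (v := fun i => ~~ v i); rewrite W_neg E subnn.
by move=> /(_ erefl i)/negbFE.
Qed.

Lemma W_0 v : (forall i, v i = false) -> W v = 0.
Proof. by move=> H; rewrite /W; apply/eqP; rewrite cards_eq0; apply/eqP/setP => i; rewrite !inE H. Qed.

Lemma W_M v : (forall i, v i) -> W v = M.
Proof.
move=> H; rewrite /W; have -> : [set i | v i] = [set: 'I_M].
  by apply/setP => i; rewrite !inE H.
by rewrite cardsT card_ord.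
Qed.

Lemma W_xor_ge u v : W u <= W (fun i => u i (+) v i) + W v.
Proof.
rewrite (W_eq (u := u) (v := fun i => (u i (+) v i) (+) v i)); last first.
  by move=> i; rewrite -addbA addbb addbF.
exact: W_xor_le.
Qed.

End Weights.

Lemma xorsum_uniq n (F : 'I_n -> bool) :
  (forall j k, F j -> F k -> j = k) ->
  \big[addb/false]_(j < n) F j = [exists j, F j].
Proof.
move=> U; case: (pickP F) => [j Fj|none].
  rewrite (bigD1 j) //= Fj big1 => [|k kj].
    by apply/esym/existsP; exists j.
  by apply/negbTE; apply: contraNN kj => Fk'; apply/eqP; exact: U.
rewrite big1 //; apply/esym/negbTE/existsP => -[j]; by rewrite none.
Qed.

Lemma xorsum_true n : \big[addb/false]_(j < n) true = odd n.
Proof. by elim: n => [|n IH]; rewrite ?big_ord0 // big_ord_recr /= IH addbT. Qed.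

Section Core.
Local Close Scope classical_set_scope.
Variables N M : nat.
Variable y : 'I_N.+1 -> 'I_M.+1 -> bool.
Hypotheses (hN : 8 <= N) (hM : 8 <= M) (oN : odd N.+1) (oM : odd M.+1).
Hypothesis Hy : forall j, Kw (y j).
Hypothesis Hp : forall j k, j != k -> Kw (fun i => y j i (+) y k i).
Hypothesis Hs : Kw (fun i => \big[addb/false]_(j < N.+1) y j i).

Lemma ex_other (j : 'I_N.+1) : exists k, k != j.
Proof.
case: (eqVneq j ord0) => [->|jn]; last by exists ord0; rewrite eq_sym.
exists (inord 1); apply/eqP => /(congr1 val) /=; rewrite inordK //; lia.
Qed.

Lemma wy j : (W (y j) == 1) || (W (y j) == 2).
Proof.
move: (Hy j); case/or3P => [/eqP->|/eqP->|/eqP E] //; exfalso.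
have [k kj] := ex_other j.
have Yj := WM E.
have E' : W (fun i => y j i (+) y k i) = M.+1 - W (y k).
  by rewrite -W_neg; apply: W_eq => i; rewrite Yj.
have jk : j != k by rewrite eq_sym.
move: (Hy k) (Hp jk); rewrite /Kw E'.
by case/or3P => /eqP h1; case/or3P => /eqP h2; lia.
Qed.

Lemma wy2 j : W (y j) <= 2.
Proof. by case/orP: (wy j) => /eqP ->. Qed.

Lemma wp j k : j != k ->
  (W (fun i => y j i (+) y k i) == 1) || (W (fun i => y j i (+) y k i) == 2).
Proof.
move=> jk; move: (Hp jk); case/or3P => [/eqP->|/eqP->|/eqP E] //; exfalso.
have := W_xor_le (y j) (y k); rewrite E.
have := wy2 j; have := wy2 k; lia.
Qed.

Lemma yinj j k : (forall i, y j i = y k i) -> j = k.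
Proof.
move=> E; case: (eqVneq j k) => // jk; exfalso.
have := wp jk; rewrite (W_0 (v := fun i => y j i (+) y k i)) //.
by move=> i; rewrite E addbb.
Qed.

Lemma small_subset (v : 'I_M.+1 -> bool) a b :
  W v <= 2 -> v a -> v b -> a != b -> forall i, v i = (i == a) || (i == b).
Proof.
move=> Wv va vb ab.
have E : [set a; b] = [set i | v i].
  apply/eqP; rewrite eqEcard cards2 ab; apply/andP; split; last exact: Wv.
  by apply/fintype.subsetP => i; rewrite !inE => /orP[] /eqP ->.
move=> i; have : (i \in [set a; b]) = (i \in [set i | v i]) by rewrite E.
by rewrite !inE => <-.
Qed.

Lemma caseA : (forall j, W (y j) = 1) -> N = M.
Proof.
move=> H1.
have /choice [s Hs1] : forall j, exists p, forall i, y j i = (i == p).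
  move=> j; have /cards1P [x Ex] : W (y j) == 1 by rewrite H1.
  exists x => i; have : (i \in [set i | y j i]) = (i \in [set x]) by rewrite Ex.
  by rewrite !inE.
have sinj : injective s.
  move=> j k E; apply: yinj => i; by rewrite !Hs1 E.
have ES : [set i | \big[addb/false]_(j < N.+1) y j i] = s @: [set: 'I_N.+1].
  apply/setP => i; rewrite inE.
  rewrite (xorsum_uniq (F := fun j => y j i)); last first.
    by move=> j k; rewrite !Hs1 => /eqP -> /eqP E; apply: sinj.
  apply/existsP/imsetP => [[j]|[j _ ->]].
    by rewrite Hs1 => /eqP ->; exists j.
  by exists j; rewrite Hs1.
move: Hs; rewrite /Kw /W ES card_imset // cardsT card_ord.
by case/or3P => /eqP h; lia.
Qed.


Lemma yneqP j k : j != k -> exists i, y j i != y k i.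
Proof.
move=> jk; apply: (contra_notP _ (negP jk)) => H; apply/eqP; apply: yinj => i.
by apply/eqP; apply: contraT => ne; exfalso; apply: H; exists i.
Qed.

Section Centre.
Variables (j0 : 'I_N.+1) (p q : 'I_M.+1).
Hypothesis pq : p != q.
Hypothesis Hj0 : forall i, y j0 i = (i == p) || (i == q).

Lemma meet j : y j p || y j q.
Proof.
apply: contraT => /norP [np nq].
have jj0 : j != j0 by apply/eqP => E; move: np; rewrite E Hj0 eqxx.
have := wp jj0.
rewrite W_xor_disj; last by move=> i; rewrite Hj0; case: eqP => [->|_]; case: eqP => [->|_];
  rewrite ?(negbTE np) ?(negbTE nq) ?andbF.
have -> : W (y j0) = 2.
  rewrite /W; have -> : [set i | y j0 i] = [set p; q].
    by apply/setP => i; rewrite !inE Hj0.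
  by rewrite cards2 pq.
case: (W (y j)) (wy j) => [|[|[|]]] //.
Qed.

Lemma cross j k : ~~ y j p -> y j q -> y k p -> ~~ y k q ->
  forall i, i != p -> i != q -> y j i = y k i.
Proof.
move=> a b c d i ip iq.
have jk : j != k by apply/eqP => E; move: a; rewrite E c.
have Wx : W (fun i => y j i (+) y k i) <= 2 by case/orP: (wp jk) => /eqP ->.
have := small_subset Wx (a := p) (b := q).
rewrite (negbTE a) c b (negbTE d) => /(_ erefl erefl pq i).
by rewrite (negbTE ip) (negbTE iq); case: (y j i); case: (y k i).
Qed.

Lemma centre : (forall j, y j p) \/ (forall j, y j q).
Proof.
case: (pselect (forall j, y j p)) => [|/existsNP [b /negP nbp]]; first by left.
case: (pselect (forall j, y j q)) => [|/existsNP [c /negP ncq]]; first by right.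
exfalso.
have bq : y b q by move: (meet b); rewrite (negbTE nbp).
have cp : y c p by move: (meet c); rewrite (negbTE ncq) orbF.
have cls : forall j, [\/ forall i, y j i = y j0 i, forall i, y j i = y b i
                          | forall i, y j i = y c i].
  move=> j; case jp: (y j p); case jq: (y j q).
  - constructor 1; move=> i; rewrite Hj0.
    by apply: small_subset => //; exact: wy2.
  - constructor 3 => i.
    case: (eqVneq i p) => [->|ip]; first by rewrite jp cp.
    case: (eqVneq i q) => [->|iq]; first by rewrite jq (negbTE ncq).
    rewrite -(cross (j := b) (k := j)) ?jp ?jq //.
    exact: (cross (j := b) (k := c)).
  - constructor 2 => i.
    case: (eqVneq i p) => [->|ip]; first by rewrite jp (negbTE nbp).
    case: (eqVneq i q) => [->|iq]; first by rewrite jq bq.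
    rewrite (cross (j := j) (k := c)) ?jp ?jq //.
    by rewrite -(cross (j := b) (k := c)).
  - by move: (meet j); rewrite jp jq.
pose kap (j : 'I_N.+1) : 'I_3 :=
  if [forall i, y j i == y j0 i] then ord0
  else if [forall i, y j i == y b i] then inord 1 else inord 2.
have val_kap : forall j, val (kap j) = if [forall i, y j i == y j0 i] then 0
    else if [forall i, y j i == y b i] then 1 else 2.
  by move=> j; rewrite /kap; case: ifP => //; case: ifP => //= _ _; rewrite inordK.
have getC : forall j, ~~ [forall i, y j i == y j0 i] -> ~~ [forall i, y j i == y b i] ->
    forall i, y j i = y c i.
  move=> j nA nB; case: (cls j) => // H; exfalso.
    by move/negP: nA; apply; apply/forallP => i; rewrite H.
  by move/negP: nB; apply; apply/forallP => i; rewrite H.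
have kinj : injective kap.
  move=> j k /(congr1 val); rewrite !val_kap.
  case Aj: [forall i, y j i == y j0 i]; case Ak: [forall i, y k i == y j0 i];
  case Bj: [forall i, y j i == y b i]; case Bk: [forall i, y k i == y b i] => /= E;
  try discriminate E; apply: yinj => i.
  all: try (by move/forallP/(_ i)/eqP: Aj ->; move/forallP/(_ i)/eqP: Ak ->).
  all: try (by move/forallP/(_ i)/eqP: Bj ->; move/forallP/(_ i)/eqP: Bk ->).
  by rewrite (getC j) ?Aj ?Bj // (getC k) ?Ak ?Bk.
have := leq_card kap kinj; rewrite !card_ord; lia.
Qed.

End Centre.

Section Star.
Variable c : 'I_M.+1.
Hypothesis Hc : forall j, y j c.

Lemma star_shape j i : i != c -> y j i -> forall i', y j i' = (i' == c) || (i' == i).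
Proof. by move=> ic yi; apply: small_subset => //; [exact: wy2|rewrite eq_sym]. Qed.

Lemma shared j k i : i != c -> y j i -> y k i -> j = k.
Proof.
move=> ic yj yk; apply: yinj => i'.
by rewrite (star_shape ic yj) (star_shape ic yk).
Qed.

Lemma uniq_leaf j i i' : i != c -> i' != c -> y j i -> y j i' -> i = i'.
Proof.
move=> ic i'c yi yi'; move: yi'; rewrite (star_shape ic yi) (negbTE i'c) /=.
by move=> /eqP.
Qed.

Definition J2 := [set j | [exists i, (i != c) && y j i]].
Definition leaf j := odflt c [pick i | (i != c) && y j i].

Lemma leafP j : j \in J2 -> (leaf j != c) && y j (leaf j).
Proof.
rewrite inE /leaf => /existsP [i Hi]; case: pickP => [i' //|/(_ i)].
by rewrite Hi.
Qed.

Lemma cardJ2 : N <= #|J2|.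
Proof.
have H1 : #|~: J2| <= 1.
  apply/card_le1P => j; rewrite !inE => nj k; rewrite !inE.
  apply/idP/eqP => [nk|->//]; apply: yinj => i.
  case: (eqVneq i c) => [->|ic]; first by rewrite !Hc.
  move/existsP: nj => nj; move/existsP: nk => nk.
  case yji: (y j i); first by exfalso; apply: nj; exists i; rewrite ic yji.
  case yki: (y k i) => //; by exfalso; apply: nk; exists i; rewrite ic yki.
have := cardsC J2; rewrite card_ord; lia.
Qed.

Lemma starN : N = M.
Proof.
have ES : [set i | \big[addb/false]_(j < N.+1) y j i] = c |: (leaf @: J2).
  apply/setP => i; rewrite !inE.
  case: (eqVneq i c) => [->|ic] /=.
    by rewrite (eq_bigr (fun _ => true)) ?xorsum_true // => j _; rewrite Hc.
  rewrite (xorsum_uniq (F := fun j => y j i)); last by move=> j k; exact: shared.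
  apply/existsP/imsetP => [[j yj]|[j Jj ->]].
    have Jj : j \in J2 by rewrite inE; apply/existsP; exists i; rewrite ic yj.
    exists j => //; have /andP [l1 l2] := leafP Jj; exact: uniq_leaf ic l1 yj l2.
  by exists j; have /andP [_ ->] := leafP Jj.
have cn : c \notin leaf @: J2.
  by apply/imsetP => -[j Jj E]; have := leafP Jj; rewrite -E eqxx.
have linj : {in J2 &, injective leaf}.
  move=> j k Jj Jk E; have /andP [l1 l2] := leafP Jj; have /andP [_ l3] := leafP Jk.
  by apply: (shared l1 l2); rewrite E.
have WS : W (fun i => \big[addb/false]_(j < N.+1) y j i) = 1 + #|J2|.
  by rewrite /W ES cardsU1 cn card_in_imset.
have J2le : #|J2| <= N.+1 by have := max_card (mem J2); rewrite card_ord.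
have := cardJ2; move: Hs; rewrite /Kw WS.
by case/or3P => /eqP h; lia.
Qed.

End Star.

Lemma core_main : N = M.
Proof.
case: (pselect (forall j, W (y j) = 1)) => [|/existsNP [j0 Hj0]]; first exact: caseA.
have /cards2P [p [q [pq Epq]]] : W (y j0) == 2.
  by move: (wy j0); case/orP => // /eqP.
have Hj0' : forall i, y j0 i = (i == p) || (i == q).
  move=> i; have : (i \in [set i | y j0 i]) = (i \in [set p; q]) by rewrite Epq.
  by rewrite !inE.
case: (centre pq Hj0') => H; exact: starN H.
Qed.

End Core.

Section SC.
Local Close Scope classical_set_scope.
Variables N M : nat.
Variable c : 'I_M.+1 -> bool.
Variable z : 'I_N.+1 -> 'I_M.+1 -> bool.
Hypotheses (hN : 3 <= N) (hM : 8 <= M).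
Hypothesis Hc : Kw (fun i => ~~ c i).
Hypothesis Hz : forall j, Kw (z j).
Hypothesis Hzz : forall j k, j != k -> Kw (fun i => z j i (+) z k i (+) c i).

Lemma Wc : W c = M.+1 - W (fun i => ~~ c i).
Proof.
rewrite W_neg; have := W_le c; lia.
Qed.

Lemma SC_main : forall i, c i = false.
Proof.
case: (eqVneq (W (fun i => ~~ c i)) M.+1) => [hc|hc].
  by move=> i; apply/negbTE; exact: (WM hc).
exfalso.
have hc2 : 1 <= W (fun i => ~~ c i) <= 2.
  by move: Hc hc; rewrite /Kw; case/or3P => /eqP -> //; rewrite eqxx.
pose small j := W (z j) <= 2.
have big : forall j, ~~ small j -> forall i, z j i.
  move=> j; rewrite /small; move: (Hz j); rewrite /Kw; case/or3P => /eqP h; rewrite h //.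
  by move=> _; apply: WM.
have two : forall j k, j != k -> small j = false -> small k = false -> False.
  move=> j k jk sj sk; move: (Hzz jk).
  rewrite /Kw (W_eq (v := c)); last by move=> i; rewrite (big j) ?sj // (big k) ?sk.
  by rewrite Wc; case/or3P => /eqP h; lia.
have pairs : forall j k, j != k -> small j -> small k ->
    forall i, z j i (+) z k i = ~~ c i.
  move=> j k jk sj sk i.
  have WN : W (fun i => ~~ (z j i (+) z k i (+) c i)) <= 6.
    rewrite (W_eq (u := fun i => ~~ (z j i (+) z k i (+) c i))
        (v := fun i => (z j i (+) z k i) (+) ~~ c i)); last by move=> i'; rewrite addbN.
    apply: leq_trans (W_xor_le (fun i => z j i (+) z k i) (fun i => ~~ c i)) _.
    have := W_xor_le (z j) (z k); move: sj sk; rewrite /small; lia.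
  have WE := W_neg (fun i => z j i (+) z k i (+) c i); cbv beta in WE.
  move: (Hzz jk); rewrite /Kw; case/or3P => /eqP h; try lia.
  by move: (WM h i); case: (z j i); case: (z k i); case: (c i).
have three : forall j k l, j != k -> k != l -> j != l ->
    small j -> small k -> small l -> False.
  move=> j k l jk kl jl sj sk sl.
  have E : forall i, z k i = z l i.
    by move=> i; move: (pairs j k jk sj sk i) (pairs j l jl sj sl i);
      case: (z j i); case: (z k i); case: (z l i); case: (c i).
  move: (Hzz kl); rewrite /Kw (W_eq (v := c)); last by move=> i; rewrite E addbb.
  by rewrite Wc; case/or3P => /eqP h; lia.
have d : forall x y : nat, x < 4 -> y < 4 -> x != y ->
    (inord x : 'I_N.+1) != inord y.
  move=> x y hx hy; apply: contra => /eqP/(congr1 val).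
  rewrite /= !inordK; [by move=> ->| lia | lia].
have d01 := d 0 1 erefl erefl erefl; have d02 := d 0 2 erefl erefl erefl.
have d03 := d 0 3 erefl erefl erefl; have d12 := d 1 2 erefl erefl erefl.
have d13 := d 1 3 erefl erefl erefl; have d23 := d 2 3 erefl erefl erefl.
move: d01 d02 d03 d12 d13 d23.
set a0 := (inord 0 : 'I_N.+1); set a1 := (inord 1 : 'I_N.+1).
set a2 := (inord 2 : 'I_N.+1); set a3 := (inord 3 : 'I_N.+1).
move=> d01 d02 d03 d12 d13 d23.
case s0: (small a0); case s1: (small a1); case s2: (small a2); case s3: (small a3).
all: first [ exact: (three _ _ _ d01 d12 d02 s0 s1 s2) | exact: (three _ _ _ d01 d13 d03 s0 s1 s3)
           | exact: (three _ _ _ d02 d23 d03 s0 s2 s3) | exact: (three _ _ _ d12 d23 d13 s1 s2 s3)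
           | exact: (two _ _ d01 s0 s1) | exact: (two _ _ d02 s0 s2) | exact: (two _ _ d03 s0 s3)
           | exact: (two _ _ d12 s1 s2) | exact: (two _ _ d13 s1 s3) | exact: (two _ _ d23 s2 s3) ].
Qed.

End SC.

Section Sums.
Local Close Scope classical_set_scope.

Lemma sum_xor n (a u v : 'I_n -> bool) :
  \big[addb/false]_(j < n) (a j && (u j (+) v j)) =
  \big[addb/false]_(j < n) (a j && u j) (+) \big[addb/false]_(j < n) (a j && v j).
Proof. rewrite -big_split /=; apply: eq_bigr => j _; by case: (a j); case: (u j); case: (v j). Qed.

Lemma sum_e n (a : 'I_n -> bool) k : \big[addb/false]_(j < n) (a j && (j == k)) = a k.
Proof.
rewrite (bigD1 k) //= eqxx andbT big1 ?addbF // => j /negbTE ->; by rewrite andbF.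
Qed.

Lemma sum_const n (a : 'I_n -> bool) b :
  \big[addb/false]_(j < n) (a j && b) = b && \big[addb/false]_(j < n) a j.
Proof.
case: b; first by apply: eq_bigr => j _; rewrite andbT.
by rewrite big1 // => j _; rewrite andbF.
Qed.

Definition ev n (k : 'I_n) := fun j : 'I_n => j == k.
Definition pv n (j k : 'I_n) := fun l : 'I_n => (l == j) (+) (l == k).

Lemma W_ev n (k : 'I_n) : W (ev k) = 1.
Proof.
rewrite /W; have -> : [set l | ev k l] = [set k] by apply/setP => l; rewrite !inE.
exact: cards1.
Qed.

Lemma W_pv n (j k : 'I_n) : j != k -> W (pv j k) = 2.
Proof.
move=> jk; rewrite /W; have -> : [set l | pv j k l] = [set j; k].
  apply/setP => l; rewrite !inE /pv.
  by case: (eqVneq l j) => [->|]; [rewrite (negbTE jk)|]; case: (eqVneq l k).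
by rewrite cards2 jk.
Qed.

Lemma sum_pv n (a : 'I_n -> bool) j k :
  \big[addb/false]_(l < n) (a l && pv j k l) = a j (+) a k.
Proof. by rewrite /pv sum_xor !sum_e. Qed.

Definition lin n (a0 : bool) (a : 'I_n -> bool) (x : n.-tuple bool) :=
  a0 (+) \big[addb/false]_(j < n) (a j && tnth x j).

Definition pt n (neg : bool) (u : 'I_n -> bool) : n.-tuple bool :=
  [tuple u j (+) neg | j < n].

Lemma lin_pt n a0 (a : 'I_n -> bool) neg u :
  lin a0 a (pt neg u) =
  a0 (+) (neg && \big[addb/false]_(j < n) a j) (+) \big[addb/false]_(j < n) (a j && u j).
Proof.
rewrite /lin (eq_bigr (fun j => a j && (u j (+) neg))); last by move=> j _; rewrite tnth_mktuple.
by rewrite sum_xor sum_const; case: neg; case: (\big[addb/false]_(j < n) (a j && u j)); 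
  case: (\big[addb/false]_(j < n) a j); case: a0.
Qed.

End Sums.

Section Templates.
Local Close Scope classical_set_scope.
Variable neg : bool.

Definition ar (n : nat) := (2 * n + 8)%N.

Definition Kt N (x : N.+1.-tuple bool) : bool := Kw (fun i => tnth x i (+) neg).

Definition tc (i : option nat) : nat := if i is Some n then ar n else 0.

Definition tK (i : option nat) : pred ((tc i).+1.-tuple bool) :=
  match i as o return pred ((tc o).+1.-tuple bool) with
  | None => fun _ => true
  | Some n => @Kt (ar n)
  end.

Definition hm (n : nat) : pmap (ar n).+1 :=
  [ffun x => if Kt x then Some ((tnth x (inord 0) (+) neg) && (tnth x (inord 2) (+) neg))
             else None].

Lemma Kt_pt N (u : 'I_N.+1 -> bool) : Kt (pt neg u) = Kw u.
Proof.
rewrite /Kt /Kw (W_eq (u := fun i => tnth (pt neg u) i (+) neg) (v := u)) //.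
by move=> i; rewrite tnth_mktuple -addbA addbb addbF.
Qed.

End Templates.
Arguments tK : clear implicits.

Section Worlds.
Local Close Scope classical_set_scope.
Variable D : set pfun.
Hypothesis HD : total_clone D.
Hypothesis HL : forall f, D f -> L f.

Lemma coeffs M N (psi : 'I_M.+1 -> pmap N.+1) : (forall i, D (mkpf (psi i))) ->
  exists a0 : 'I_M.+1 -> bool, exists a : 'I_M.+1 -> 'I_N.+1 -> bool,
    forall i x, psi i x = Some (lin (a0 i) (a i) x).
Proof.
move=> Hp.
have /choice [f Hf] : forall i, exists pa : bool * ('I_N.+1 -> bool),
    forall x, psi i x = Some (lin pa.1 pa.2 x).
  move=> i; have [a0 [a Ha]] := HL (Hp i); by exists (a0, a) => x; rewrite Ha.
by exists (fun i => (f i).1), (fun i => (f i).2).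
Qed.

Lemma lin_const n a0 (a : 'I_n -> bool) (x : n.-tuple bool) b :
  (forall j, tnth x j = b) -> lin a0 a x = a0 (+) (b && \big[addb/false]_(j < n) a j).
Proof.
move=> H; rewrite /lin -sum_const; congr (_ (+) _); apply: eq_bigr => j _; by rewrite H.
Qed.

Lemma W_one n : W (fun _ : 'I_n => true) = n.
Proof. exact: W_M. Qed.

Lemma Kw_one n : Kw (fun _ : 'I_n => true).
Proof. by rewrite /Kw W_one eqxx !orbT. Qed.

Lemma Kw_ev n (k : 'I_n) : Kw (ev k).
Proof. by rewrite /Kw W_ev. Qed.

Lemma Kw_pv n (j k : 'I_n) : j != k -> Kw (pv j k).
Proof. by move=> jk; rewrite /Kw W_pv. Qed.

Lemma ar_ge n : 8 <= ar n. Proof. rewrite /ar; lia. Qed.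
Lemma ar_odd n : odd (ar n).+1. Proof. rewrite /ar; lia. Qed.

Lemma ord_neq n (x y : nat) : x <= n -> y <= n -> x != y -> (inord x : 'I_n.+1) != inord y.
Proof.
move=> hx hy xy; apply: contra xy => /eqP/(congr1 val).
by rewrite /= !inordK // => ->.
Qed.

Variable neg : bool.

Lemma H0 : exists p, tK neg None p.
Proof. by exists [tuple of [:: false]]. Qed.

Lemma H2 n : ~ free D (tK neg (Some n)) (hm neg n).
Proof.
apply; exists (fun i => proj i); split; first by move=> i; exact: HD.1.1.
move=> p Kp; have -> : [tuple odflt false (proj i p) | i < (ar n).+1] = p.
  by apply: eq_from_tnth => i; rewrite tnth_mktuple /proj ffunE.
by rewrite /hm ffunE; move: Kp => /= ->.
Qed.

Lemma hm_pt n (u : 'I_(ar n).+1 -> bool) : Kw u ->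
  hm neg n (pt neg u) = Some (u (inord 0) && u (inord 2)).
Proof.
move=> Ku; rewrite /hm ffunE Kt_pt Ku !tnth_mktuple.
by rewrite -!addbA addbb !addbF.
Qed.

Lemma H1 n : ~ StrD D (mkpf (hm neg n)).
Proof.
move=> [d [Dd Rd]]; have [a0 [a Ha]] := HL Dd; simpl in Ha, Rd.
have E : forall u, Kw u -> lin a0 a (pt neg u) = u (inord 0) && u (inord 2).
  move=> u Ku; case: (Rd (pt neg u)); rewrite hm_pt //.
  by rewrite Ha => -[].
have n8 := ar_ge n.
have d01 : (inord 0 : 'I_(ar n).+1) != inord 1 by apply: ord_neq; lia.
have d02 : (inord 0 : 'I_(ar n).+1) != inord 2 by apply: ord_neq; lia.
have d12 : (inord 1 : 'I_(ar n).+1) != inord 2 by apply: ord_neq; lia.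
have E1 := E _ (Kw_ev (inord 0)); have E2 := E _ (Kw_ev (inord 1)).
have E3 := E _ (Kw_pv d02); have E4 := E _ (Kw_pv d12).
rewrite !lin_pt /ev /pv !sum_e !sum_pv in E1 E2 E3 E4.
have d10 : (inord 1 : 'I_(ar n).+1) != inord 0 by rewrite eq_sym.
have d20 : (inord 2 : 'I_(ar n).+1) != inord 0 by rewrite eq_sym.
have d21 : (inord 2 : 'I_(ar n).+1) != inord 1 by rewrite eq_sym.
move: E1 E2 E3 E4; rewrite !eqxx ?(negbTE d01) ?(negbTE d02) ?(negbTE d12).
rewrite ?(negbTE d10) ?(negbTE d20) ?(negbTE d21) /=.
move: (neg && _) => t.
by clear E Ha; case: a0; case: t; case: (a (inord 0)); case: (a (inord 1)); case: (a (inord 2)).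
Qed.

Lemma img n m (psi : 'I_(ar n).+1 -> pmap (ar m).+1) (a0 : 'I_(ar n).+1 -> bool)
  (a : 'I_(ar n).+1 -> 'I_(ar m).+1 -> bool) :
  (forall i x, psi i x = Some (lin (a0 i) (a i) x)) ->
  (forall p, tK neg (Some m) p -> hm neg n [tuple odflt false (psi i p) | i < (ar n).+1] != None) ->
  forall u, Kw u ->
   Kw (fun i => a0 i (+) (neg && \big[addb/false]_(j < (ar m).+1) a i j) (+)
                \big[addb/false]_(j < (ar m).+1) (a i j && u j) (+) neg).
Proof.
move=> Ha HK u Ku.
have Hd := HK (pt neg u); rewrite /= Kt_pt Ku in Hd; have {}Hd := Hd erefl.
have Kt_t : Kt neg [tuple odflt false (psi i (pt neg u)) | i < (ar n).+1].
  by move: Hd; rewrite /hm ffunE; case: ifP.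
move: Kt_t; rewrite /Kt /Kw.
rewrite (W_eq (v := fun i => a0 i (+) (neg && \big[addb/false]_(j < (ar m).+1) a i j) (+)
                \big[addb/false]_(j < (ar m).+1) (a i j && u j) (+) neg)) //.
by move=> i; rewrite tnth_mktuple Ha /= lin_pt.
Qed.

Lemma from_img n m (c : 'I_(ar n).+1 -> bool) (a : 'I_(ar n).+1 -> 'I_(ar m).+1 -> bool) :
  (forall u, Kw u -> Kw (fun i => c i (+) \big[addb/false]_(j < (ar m).+1) (a i j && u j))) ->
  [/\ forall j, Kw (fun i => c i (+) a i j),
      forall j k, j != k -> Kw (fun i => c i (+) a i j (+) a i k) &
      Kw (fun i => c i (+) \big[addb/false]_(j < (ar m).+1) a i j)].
Proof.
move=> H; split.
- move=> j; have := H _ (Kw_ev j); rewrite /Kw.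
  by rewrite (W_eq (v := fun i => c i (+) a i j)) // => i; rewrite sum_e.
- move=> j k jk; have := H _ (Kw_pv jk); rewrite /Kw.
  by rewrite (W_eq (v := fun i => c i (+) a i j (+) a i k)) // => i; rewrite sum_pv addbA.
- have := H _ (Kw_one _); rewrite /Kw.
  rewrite (W_eq (v := fun i => c i (+) \big[addb/false]_(j < (ar m).+1) a i j)) //.
  by move=> i; congr (_ (+) _); apply: eq_bigr => j _; rewrite andbT.
Qed.

Lemma finish n m (a : 'I_(ar n).+1 -> 'I_(ar m).+1 -> bool) :
  (forall u, Kw u -> Kw (fun i => \big[addb/false]_(j < (ar m).+1) (a i j && u j))) ->
  m = n.
Proof.
move=> H.
have E : ar m = ar n.
  apply: (core_main (y := fun j i => a i j)); try exact: ar_ge; try exact: ar_odd.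
  - move=> j; have := H _ (Kw_ev j); rewrite /Kw.
    by rewrite (W_eq (v := fun i => a i j)) // => i; rewrite sum_e.
  - move=> j k jk; have := H _ (Kw_pv jk); rewrite /Kw.
    by rewrite (W_eq (v := fun i => a i j (+) a i k)) // => i; rewrite sum_pv.
  - have := H _ (Kw_one _); rewrite /Kw.
    rewrite (W_eq (v := fun i => \big[addb/false]_(j < (ar m).+1) a i j)) //.
    by move=> i; apply: eq_bigr => j _; rewrite andbT.
by move: E; rewrite /ar; lia.
Qed.

End Worlds.

Section T0.
Local Close Scope classical_set_scope.
Variable D : set pfun.
Hypothesis HD : total_clone D.
Hypothesis HL : forall f, D f -> L f.
Hypothesis HT : forall f, D f -> T false f.

Lemma H3_T0 n : free D (tK false None) (hm false n).
Proof.
move=> [psi [Hpsi HK]]; have := HK [tuple of nseq 1 false] erefl.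
have -> : [tuple odflt false (psi i [tuple of nseq 1 false]) | i < (ar n).+1] =
          [tuple of nseq (ar n).+1 false].
  apply: eq_from_tnth => i; rewrite tnth_mktuple tnth_nseq.
  by have := (HT (Hpsi i)).2 => /= ->.
rewrite /hm ffunE /Kt /Kw (W_0 (v := fun i => _ (+) false)) //.
by move=> i; rewrite tnth_nseq.
Qed.

Lemma H4_T0 n m : n <> m -> free D (tK false (Some m)) (hm false n).
Proof.
move=> nm [psi [Hpsi HK]]; have [a0 [a Ha]] := coeffs HL Hpsi.
have a00 : forall i, a0 i = false.
  move=> i; have := (HT (Hpsi i)).2; rewrite /= Ha => -[].
  by rewrite (@lin_const _ _ _ _ false) ?addbF // => j; rewrite tnth_nseq.
have I := img Ha HK.
apply: nm; apply/esym/(finish (a := a)) => u Ku.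
have := I u Ku; rewrite /Kw (W_eq (v := fun i => \big[addb/false]_(j < (ar m).+1) (a i j && u j))) //.
by move=> i; rewrite a00 /= addbF.
Qed.

End T0.

Section T1.
Local Close Scope classical_set_scope.
Variable D : set pfun.
Hypothesis HD : total_clone D.
Hypothesis HL : forall f, D f -> L f.
Hypothesis HT : forall f, D f -> T true f.

Lemma H3_T1 n : free D (tK true None) (hm true n).
Proof.
move=> [psi [Hpsi HK]]; have := HK [tuple of nseq 1 true] erefl.
have -> : [tuple odflt false (psi i [tuple of nseq 1 true]) | i < (ar n).+1] =
          [tuple of nseq (ar n).+1 true].
  apply: eq_from_tnth => i; rewrite tnth_mktuple tnth_nseq.
  by have := (HT (Hpsi i)).2 => /= ->.
rewrite /hm ffunE /Kt /Kw (W_0 (v := fun i => _ (+) true)) //.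
by move=> i; rewrite tnth_nseq.
Qed.

Lemma H4_T1 n m : n <> m -> free D (tK true (Some m)) (hm true n).
Proof.
move=> nm [psi [Hpsi HK]]; have [a0 [a Ha]] := coeffs HL Hpsi.
have a01 : forall i, a0 i (+) \big[addb/false]_(j < (ar m).+1) a i j = true.
  move=> i; have := (HT (Hpsi i)).2; rewrite /= Ha => -[].
  by rewrite (@lin_const _ _ _ _ true) // => j; rewrite tnth_nseq.
have I := img Ha HK.
apply: nm; apply/esym/(finish (a := a)) => u Ku.
have := I u Ku; rewrite /Kw (W_eq (v := fun i => \big[addb/false]_(j < (ar m).+1) (a i j && u j))) //.
move=> i; move: (a01 i); rewrite /=.
by case: (a0 i); case: (\big[addb/false]_(j < (ar m).+1) a i j);
  case: (\big[addb/false]_(j < (ar m).+1) (a i j && u j)).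
Qed.

End T1.

Section SD.
Local Close Scope classical_set_scope.
Variable D : set pfun.
Hypothesis HD : total_clone D.
Hypothesis HL : forall f, D f -> L f.
Hypothesis HS : forall f, D f -> S f.

Lemma H3_S n : free D (tK false None) (hm false n).
Proof.
move=> [psi [Hpsi HK]].
pose p0 := [tuple of nseq 1 false].
have H0' := HK p0 erefl; have H1' := HK (map_tuple negb p0) erefl.
pose b i := odflt false (psi i p0).
have E0 : [tuple odflt false (psi i p0) | i < (ar n).+1] = [tuple b i | i < (ar n).+1] by [].
have E1 : [tuple odflt false (psi i (map_tuple negb p0)) | i < (ar n).+1] =
          [tuple ~~ b i | i < (ar n).+1].
  apply: eq_from_tnth => i; rewrite !tnth_mktuple /b.
  have := (HS (Hpsi i)).2 p0 => /= ->.
  by have := Dtot HD p0 (Hpsi i); case: (psi i p0).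
move: H0' H1'; rewrite E0 E1 /hm !ffunE /Kt.
case: ifP => // K0 _; case: ifP => // K1 _.
move: K0 K1; rewrite /Kw.
rewrite (W_eq (u := fun i => tnth _ i (+) false) (v := b)); last by move=> i; rewrite tnth_mktuple addbF.
rewrite (W_eq (u := fun i => tnth _ i (+) false) (v := fun i => ~~ b i)); last by move=> i; rewrite tnth_mktuple addbF.
rewrite W_neg; have := W_le b; have := ar_ge n.
by move=> h8 hl; case/or3P => /eqP h1; case/or3P => /eqP h2; lia.
Qed.

Lemma H4_S n m : n <> m -> free D (tK false (Some m)) (hm false n).
Proof.
move=> nm [psi [Hpsi HK]]; have [a0 [a Ha]] := coeffs HL Hpsi.
have sa : forall i, \big[addb/false]_(j < (ar m).+1) a i j = true.
  move=> i; have := (HS (Hpsi i)).2 [tuple false | j < (ar m).+1].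
  rewrite !Ha => -[] E; move: E.
  rewrite (@lin_const _ _ _ [tuple false | _ < (ar m).+1] false); last by move=> j; rewrite tnth_mktuple.
  rewrite (@lin_const _ _ _ _ true); last by move=> j; rewrite tnth_map tnth_mktuple.
  by case: (a0 i); case: (\big[addb/false]_(j < (ar m).+1) a i j).
have I := img Ha HK.
have I' : forall u, Kw u -> Kw (fun i => a0 i (+) \big[addb/false]_(j < (ar m).+1) (a i j && u j)).
  move=> u Ku; have := I u Ku; rewrite /Kw.
  by rewrite (W_eq (v := fun i => a0 i (+) \big[addb/false]_(j < (ar m).+1) (a i j && u j))) //
    => i; rewrite /= !addbF.
have [F1 F2 F3] := from_img I'.
have a00 : forall i, a0 i = false.
  apply: (SC_main (z := fun j i => a0 i (+) a i j)); try exact: ar_ge.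
  - rewrite /tc; have := ar_ge m; lia.
  - by rewrite /Kw (W_eq (v := fun i => a0 i (+) \big[addb/false]_(j < (ar m).+1) a i j)) // => i;
      rewrite sa addbT.
  - exact: F1.
  - move=> j k jk; have := F2 j k jk; rewrite /Kw.
    by rewrite (W_eq (v := fun i => a0 i (+) a i j (+) a i k)) // => i;
      case: (a0 i); case: (a i j); case: (a i k).
apply: nm; apply/esym/(finish (a := a)) => u Ku.
have := I' u Ku; rewrite /Kw.
by rewrite (W_eq (v := fun i => \big[addb/false]_(j < (ar m).+1) (a i j && u j))) // => i;
  rewrite a00.
Qed.

End SD.

Unset Implicit Arguments.

Theorem mainTheorem7 (D : set pfun) :
  total_clone D -> D `<=` L ->
  (D `<=` T false \/ D `<=` T true \/ D `<=` S) ->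
  (Istr D #= [set: set nat])%card.
Proof.
move=> HD HL HB.
have G : forall neg, (forall n, free D (tK neg None) (hm neg n)) ->
    (forall n m, n <> m -> free D (tK neg (Some m)) (hm neg n)) ->
    (Istr D #= [set: set nat])%card.
  move=> neg H3 H4.
  apply: (@card_Istr D HD tc (tK neg) ar (hm neg)) => //.
  - by move=> n; exact: (@H1 D HL neg n).
  - by move=> n; exact: (@H2 D HD neg n).
  - exact: (H0 neg).
case: HB => [HT|[HT|HS]].
- apply: (G false) => [n|n m]; [exact: (H3_T0 HT) | exact: (H4_T0 HL HT)].
- apply: (G true) => [n|n m]; [exact: (H3_T1 HT) | exact: (H4_T1 HL HT)].
- apply: (G false) => [n|n m]; [exact: (H3_S HD HS) | exact: (H4_S HL HS)].
Qed.
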